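(* If $X\in \mathcal{B(H)}$ and $q \in \mathcal{D'}$, then \[ w_q \left(\begin{bmatrix} 0 & X\\ X & 0 \end{bmatrix}\right) \ge \frac{|q|}{2}\|X\|+ \frac{|q|}{2}\big|\|\mathcal{R}(X)\|-\|\mathcal{I}(X)\|\big|. \]
   Context: $\mathcal{H}$ is a complex Hilbert space, $\mathcal{B(H)}$ the bounded operators on it with operator norm; $2\times2$ operator matrices act on $\mathcal{H}\oplus\mathcal{H}$. $\mathcal{R}(X)=\frac{X+X^*}{2}$, $\mathcal{I}(X)=\frac{X-X^*}{2i}$. $\mathcal{D}$ is the closed unit disc in $\mathbb{C}$, $\mathcal{D'}=\mathcal{D}\setminus\{0\}$. $w_q(T)=\sup\{|\langle Tx,y\rangle| : \|x\|=\|y\|=1,\ \langle x,y\rangle=q\}$. *)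

(* Defs.v *)
From HB Require Import structures.
From mathcomp Require Import all_boot all_order all_algebra.
From mathcomp Require Import all_classical all_reals.
From mathcomp Require Import complex.
Set Implicit Arguments.
Unset Strict Implicit.
Unset Printing Implicit Defensive.
Import Order.TTheory GRing.Theory Num.Theory.
Local Open Scope ring_scope.
Local Open Scope classical_set_scope.

Definition cabs (R : realType) (z : R[i]) : R :=
  Num.sqrt (complex.Re z ^+ 2 + complex.Im z ^+ 2).

Record chilbert (R : realType) := CHilbert {
  hcar :> lmodType R[i];
  hinner : hcar -> hcar -> R[i];
  hinnerDl : forall (a : R[i]) (x y z : hcar),
      hinner (a *: x + y) z = a * hinner x z + hinner y z;
  hinner_conj : forall x y : hcar, hinner y x = complex.conjc (hinner x y);
  hinner_ge0 : forall x : hcar, 0 <= hinner x x;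
  hinner_eq0 : forall x : hcar, hinner x x = 0 -> x = 0;
  hcomplete : forall u : nat -> hcar,
      (forall e : R, 0 < e -> exists N, forall m n, (N <= m)%N -> (N <= n)%N ->
          cabs (hinner (u m - u n) (u m - u n)) < e ^+ 2) ->
      exists l : hcar, forall e : R, 0 < e -> exists N, forall n, (N <= n)%N ->
          cabs (hinner (u n - l) (u n - l)) < e ^+ 2
}.

Section Ops.
Variables (R : realType) (H : chilbert R).

Definition hnorm (x : H) : R := Num.sqrt (complex.Re (hinner x x)).

Definition bounded_op (X : H -> H) : Prop :=
  (forall (a : R[i]) (x y : H), X (a *: x + y) = a *: X x + X y) /\
  exists M : R, forall x : H, hnorm (X x) <= M * hnorm x.

Definition opnorm (X : H -> H) : R :=
  sup [set hnorm (X x) | x in [set x : H | hnorm x <= 1]].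

Definition is_adjoint (X Xs : H -> H) : Prop :=
  forall x y : H, hinner (X x) y = hinner x (Xs y).

Definition re_op (X Xs : H -> H) : H -> H :=
  fun x => (2 : R[i])^-1 *: (X x + Xs x).
Definition im_op (X Xs : H -> H) : H -> H :=
  fun x => ((2 : R[i]) * 'i%C)^-1 *: (X x - Xs x).

Definition dsum_inner (x y : H * H) : R[i] :=
  hinner x.1 y.1 + hinner x.2 y.2.

Definition opmx (A B C D : H -> H) : H * H -> H * H :=
  fun x => (A x.1 + B x.2, C x.1 + D x.2).

Definition zero_op : H -> H := fun _ => 0.

Definition wq_dsum (q : R[i]) (T : H * H -> H * H) : R :=
  sup [set cabs (dsum_inner (T p.1) p.2) | p in
         [set p : (H * H) * (H * H) |
            dsum_inner p.1 p.1 = 1 /\ dsum_inner p.2 p.2 = 1 /\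
            dsum_inner p.1 p.2 = q]].
End Ops.

(* Main.v *)
Require Import Defs.
From HB Require Import structures.
From mathcomp Require Import all_boot all_order all_algebra.
From mathcomp Require Import all_classical all_reals.
From mathcomp Require Import complex.
From mathcomp Require Import ring lra.
Import Order.TTheory GRing.Theory Num.Theory.
Local Open Scope ring_scope.

Ltac cplx := apply/eqP; rewrite eq_complex /=; apply/andP; split; apply/eqP.

Section Core.
Variables (R : realType) (H : chilbert R).
Local Notation ip := (@hinner R H).
Local Notation nsq x := (complex.Re (@hinner R H x x)).

Lemma cjD (x y : R[i]) : conjc (x + y) = conjc x + conjc y.
Proof. case: x y => [a b] [c d]; cplx; ring. Qed.
Lemma cjM (x y : R[i]) : conjc (x * y) = conjc x * conjc y.
Proof. case: x y => [a b] [c d]; cplx; ring. Qed.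
Lemma cjN (x : R[i]) : conjc (- x) = - conjc x.
Proof. case: x => [a b]; cplx; ring. Qed.
Lemma cjK (x : R[i]) : conjc (conjc x) = x.
Proof. case: x => [a b]; cplx; ring. Qed.

Lemma ipDl x y z : ip (x + y) z = ip x z + ip y z.
Proof. by have := hinnerDl 1 x y z; rewrite scale1r mul1r. Qed.
Lemma ip0l z : ip 0 z = 0.
Proof.
have h := ipDl 0 0 z; rewrite addr0 in h.
by apply/(addrI (ip 0 z)); rewrite addr0 -h.
Qed.
Lemma ipZl a x z : ip (a *: x) z = a * ip x z.
Proof. by have := hinnerDl a x 0 z; rewrite addr0 ip0l addr0. Qed.
Lemma ipNl x z : ip (- x) z = - ip x z.
Proof. by rewrite -scaleN1r ipZl mulN1r. Qed.
Lemma ipBl x y z : ip (x - y) z = ip x z - ip y z.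
Proof. by rewrite ipDl ipNl. Qed.
Lemma ipDr x y z : ip z (x + y) = ip z x + ip z y.
Proof. by rewrite hinner_conj ipDl cjD -!hinner_conj. Qed.
Lemma ipZr a x z : ip z (a *: x) = conjc a * ip z x.
Proof. by rewrite hinner_conj ipZl cjM -!hinner_conj. Qed.
Lemma ipNr x z : ip z (- x) = - ip z x.
Proof. by rewrite hinner_conj ipNl cjN -!hinner_conj. Qed.
Lemma ipBr x y z : ip z (x - y) = ip z x - ip z y.
Proof. by rewrite ipDr ipNr. Qed.
Lemma ip0r z : ip z 0 = 0.
Proof. by rewrite hinner_conj ip0l; cplx; ring. Qed.

Lemma ipxx x : ip x x = (nsq x)%:C%C.
Proof.
have := hinner_ge0 x; case: (ip x x) => a b.
by rewrite lecE /= => /andP[/eqP -> _].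
Qed.
Lemma nsq_ge0 x : 0 <= nsq x.
Proof. by have := hinner_ge0 x; rewrite lecE => /andP[_]. Qed.
Lemma nsq_eq0 x : nsq x = 0 -> x = 0.
Proof. by move=> h; apply: hinner_eq0; rewrite ipxx h. Qed.
Lemma ipC x y : ip y x = conjc (ip x y).
Proof. exact: hinner_conj. Qed.

Lemma nsq_lin (y z : H) (s t : R) :
  nsq (s%:C%C *: y + t%:C%C *: z) =
  s^+2 * nsq y + 2 * s * t * complex.Re (ip y z) + t^+2 * nsq z.
Proof.
rewrite ipDl !ipDr !ipZl !ipZr (ipC y z) (ipxx y) (ipxx z).
case: (ip y z) => a b; rewrite -!complexr0; simpc => /=.
by rewrite !expr2 mulr2n; ring.
Qed.

Lemma cs_re y z : (complex.Re (ip y z))^+2 <= nsq y * nsq z.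
Proof.
set r := complex.Re (ip y z).
have ny0 := nsq_ge0 y; have nz0 := nsq_ge0 z.
have key s t : 0 <= s^+2 * nsq y + 2 * s * t * r + t^+2 * nsq z.
  by rewrite -nsq_lin; exact: nsq_ge0.
case: (ltrP 0 (nsq z)) => hz.
  have := key (nsq z) (- r). nra.
have nz : nsq z = 0 by apply/le_anti/andP.
rewrite nz mulr0.
have [->|r0] := eqVneq r 0; first by rewrite expr0n.
have := key 1 (- (nsq y + 1) / r).
have -> : 2 * 1 * (- (nsq y + 1) / r) * r = - 2 * (nsq y + 1) by field.
rewrite nz mulr0 addr0 expr1n mul1r. lra.
Qed.

Lemma cs_sq y z : complex.Re (ip y z) ^+ 2 + complex.Im (ip y z) ^+ 2 <= nsq y * nsq z.
Proof.
have := cs_re (conjc (ip y z) *: y) z.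
rewrite ipZl ipZl ipZr (ipxx y).
have ny0 := nsq_ge0 y; have nz0 := nsq_ge0 z.
case: (ip y z) => a b /=. have -> : (a * a - - b * b) = a^+2 + b^+2 by rewrite !expr2; ring.
have -> : (a * (a * nsq y - - - b * 0) - - b * (a * 0 + - - b * nsq y)) * nsq z
   = (a^+2 + b^+2) * (nsq y * nsq z) by rewrite !expr2; ring.
have A0 : 0 <= a^+2 + b^+2 by apply: addr_ge0; apply: sqr_ge0.
move: A0; set A := a^+2 + b^+2 => A0 h.
have P0 : 0 <= nsq y * nsq z by apply: mulr_ge0.
case: (ltrP 0 A) => hA; last by have -> : A = 0 by apply/le_anti/andP.
by move: h; rewrite expr2 ler_pM2l.
Qed.

Lemma cs y z : cabs (ip y z) <= hnorm y * hnorm z.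
Proof.
rewrite /cabs /hnorm -sqrtrM ?nsq_ge0 // ler_sqrt ?cs_sq //.
by apply: mulr_ge0; apply: nsq_ge0.
Qed.

Lemma hnorm_ge0 (x : H) : 0 <= hnorm x. Proof. exact: sqrtr_ge0. Qed.
Lemma sq_hnorm (x : H) : hnorm x ^+ 2 = nsq x.
Proof. by rewrite /hnorm sqr_sqrtr // nsq_ge0. Qed.

Lemma Re_le_cabs (c : R[i]) : complex.Re c <= cabs c.
Proof.
rewrite /cabs; apply: (le_trans (ler_norm _)).
rewrite -sqrtr_sqr ler_sqrt; last by apply: addr_ge0; apply: sqr_ge0.
by rewrite lerDl sqr_ge0.
Qed.
Lemma NRe_le_cabs (c : R[i]) : - complex.Re c <= cabs c.
Proof.
rewrite /cabs; apply: (le_trans (ler_norm (- complex.Re c))); rewrite normrN.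
rewrite -sqrtr_sqr ler_sqrt; last by apply: addr_ge0; apply: sqr_ge0.
by rewrite lerDl sqr_ge0.
Qed.

Lemma scale1C (x : H) : (1:R)%:C%C *: x = x.
Proof. exact: scale1r. Qed.

Lemma nsqD y z : nsq (y + z) = nsq y + nsq z + 2 * complex.Re (ip y z).
Proof.
have := nsq_lin y z 1 1; rewrite !scale1C => ->.
by rewrite !expr1n !mul1r mulr1; ring.
Qed.

Lemma hnorm_tri (y z : H) : hnorm (y + z) <= hnorm y + hnorm z.
Proof.
have hy := hnorm_ge0 y; have hz := hnorm_ge0 z.
rewrite -(ger0_norm (addr_ge0 hy hz)) -sqrtr_sqr /hnorm ler_sqrt ?sqr_ge0 //.
rewrite nsqD -/(hnorm y) -/(hnorm z) -(sq_hnorm y) -(sq_hnorm z).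
have := le_trans (Re_le_cabs (ip y z)) (cs y z).
rewrite -/(hnorm y) -/(hnorm z) => h.
rewrite sqrrD; lra.
Qed.

Lemma hnorm_i (z : H) : hnorm ('i%C *: z) = hnorm z.
Proof.
rewrite /hnorm ipZl ipZr (ipxx z) -!complexr0 /=. congr (Num.sqrt _).
by simpc => /=; ring.
Qed.

Lemma ReD (a b : R[i]) : complex.Re (a + b) = complex.Re a + complex.Re b.
Proof. by case: a b => [? ?] [? ?]. Qed.
Lemma ReN (a : R[i]) : complex.Re (- a) = - complex.Re a.
Proof. by case: a => [? ?]. Qed.
Lemma ReB (a b : R[i]) : complex.Re (a - b) = complex.Re a - complex.Re b.
Proof. by rewrite ReD ReN. Qed.
Lemma Re_conj (a : R[i]) : complex.Re (conjc a) = complex.Re a.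
Proof. by case: a => [? ?]. Qed.
Lemma inv2C : (2 : R[i])^-1 = ((2:R)^-1)%:C%C.
Proof.
apply: mulr1_eq. rewrite -!complexr0; simpc. cplx => //=.
rewrite -[1+1]/(2%:R); first by rewrite divff // pnatr_eq0.
Qed.
Lemma Re_half (c : R[i]) : complex.Re ((2 : R[i])^-1 * c) = complex.Re c / 2.
Proof. rewrite inv2C; case: c => a b; rewrite -complexr0; simpc => /=. by ring. Qed.

Section Lin.
Variables (Y Ys : H -> H) (hY : bounded_op Y) (hYs : is_adjoint Y Ys).
Lemma Ylin a x y : Y (a *: x + y) = a *: Y x + Y y.
Proof. exact: hY.1. Qed.
Lemma YD x y : Y (x + y) = Y x + Y y.
Proof. by have := Ylin 1 x y; rewrite !scale1r. Qed.
Lemma Y0 : Y 0 = 0.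
Proof. by have := YD 0 0; rewrite addr0 => /eqP; rewrite addrC -subr_eq subrr => /eqP <-. Qed.
Lemma YZ a x : Y (a *: x) = a *: Y x.
Proof. by have := Ylin a x 0; rewrite !addr0 Y0 addr0. Qed.
Lemma YN x : Y (- x) = - Y x.
Proof. by rewrite -scaleN1r YZ scaleN1r. Qed.
Lemma YB x y : Y (x - y) = Y x - Y y.
Proof. by rewrite YD YN. Qed.

Variables (K : R) (K0 : 0 <= K) (hb : forall w, cabs (ip (Y w) w) <= K * nsq w).

Lemma pol_id u v : ip (Y (u + v)) (u + v) - ip (Y (u - v)) (u - v) =
   2 * (ip (Y u) v + ip (Y v) u).
Proof. rewrite YB YD !ipBl !ipDl !ipBr !ipDr. ring. Qed.

Lemma par_id u v : nsq (u + v) + nsq (u - v) = 2 * (nsq u + nsq v).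
Proof.
rewrite !ipBl !ipDl !ipBr !ipDr !ReB !ReD. ring.
Qed.

Lemma polar u v : complex.Re (ip (Y u) v) + complex.Re (ip (Y v) u) <=
  K * (nsq u + nsq v).
Proof.
have h := congr1 (@complex.Re R) (pol_id u v).
rewrite ReB in h.
have h2 : complex.Re (2 * (ip (Y u) v + ip (Y v) u)) = 2 * (complex.Re (ip (Y u) v) + complex.Re (ip (Y v) u)).
  by case: (ip (Y u) v) (ip (Y v) u) => [a b] [c d]; rewrite /=; simpc => /=; ring.
rewrite h2 in h.
have h3 := le_trans (Re_le_cabs _) (hb (u + v)).
have h4 := le_trans (NRe_le_cabs _) (hb (u - v)).
have := par_id u v. nra.
Qed.

Lemma re_bound u : hnorm u <= 1 -> hnorm (re_op Y Ys u) <= K.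
Proof.
move=> hu.
have nu1 : nsq u <= 1 by move: hu; rewrite /hnorm -{1}sqrtr1 ler_sqrt.
have nu0 := nsq_ge0 u.
set a := re_op Y Ys u.
have key v : complex.Re (ip a v) <= K * (nsq u + nsq v) / 2.
  rewrite /a /re_op ipZl Re_half ipDl ReD (ipC v (Ys u)) -hYs Re_conj.
  have := polar u v. lra.
have r0 := nsq_ge0 a.
case: (ltrP 0 (nsq a)) => rp; last first.
  have e : nsq a = 0 by apply/le_anti/andP.
  by rewrite /hnorm e sqrtr0.
set k := (Num.sqrt (nsq a))^-1.
have sq0 : 0 < Num.sqrt (nsq a) by rewrite sqrtr_gt0.
have ek : k * nsq a = Num.sqrt (nsq a).
  by rewrite /k -{2}(sqr_sqrtr r0) expr2 mulKf // gt_eqF.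
have h1 := key (k%:C%C *: a).
rewrite ipZr (ipxx a) -!complexr0 /= in h1.
have en : nsq (k%:C%C *: a) = 1.
  rewrite ipZl ipZr (ipxx a) -!complexr0 /=.
  have : k * (k * nsq a) = 1 by rewrite ek /k mulVf // gt_eqF.
  move=> <-; ring.
rewrite en ek in h1. rewrite /hnorm -/(nsq a).
rewrite mulr0 subr0 in h1. nra.
Qed.
End Lin.

Lemma cabsE (z : R[i]) : (cabs z)%:C%C = `|z|.
Proof. by rewrite normc_def. Qed.
Lemma cabs_ge0 (z : R[i]) : 0 <= cabs z.
Proof. exact: sqrtr_ge0. Qed.
Lemma cabsD (a b : R[i]) : cabs (a + b) <= cabs a + cabs b.
Proof. by rewrite -lecR rmorphD /= !cabsE ler_normD. Qed.
Lemma cabsM (a b : R[i]) : cabs (a * b) = cabs a * cabs b.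
Proof. by apply: complexI; rewrite rmorphM /= !cabsE normrM. Qed.
Lemma cabs0 : cabs (0 : R[i]) = 0.
Proof. by apply: complexI; rewrite cabsE normr0. Qed.
Lemma cabsR (c : R) : 0 <= c -> cabs (c%:C%C) = c.
Proof. by move=> c0; apply: complexI; rewrite cabsE normc_def /= expr0n addr0 sqrtr_sqr ger0_norm. Qed.

Definition Eset (q : R[i]) (T : H * H -> H * H) : set R :=
  [set cabs (dsum_inner (T p.1) p.2) | p in
         [set p : (H * H) * (H * H) |
            dsum_inner p.1 p.1 = 1 /\ dsum_inner p.2 p.2 = 1 /\
            dsum_inner p.1 p.2 = q]].

Lemma nsq_le1 (x : H * H) : dsum_inner x x = 1 -> nsq x.1 <= 1 /\ nsq x.2 <= 1.
Proof.
move=> /(congr1 (@complex.Re R)); rewrite /dsum_inner ReD /= => h.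
have := nsq_ge0 x.1; have := nsq_ge0 x.2. lra.
Qed.

Lemma hnorm_le1 (x : H) : nsq x <= 1 -> hnorm x <= 1.
Proof. by move=> h; rewrite /hnorm -sqrtr1 ler_sqrt. Qed.

Lemma bound_E (X : H -> H) (hX : bounded_op X) q :
  has_ubound (Eset q (opmx (@zero_op R H) X X (@zero_op R H))).
Proof.
case: hX.2 => M hM.
exists (2 * `|M|) => _ [[x y] [/= hx [hy _]] <-].
rewrite /opmx /zero_op /= /dsum_inner !add0r !addr0.
have [hx1 hx2] := nsq_le1 _ hx; have [hy1 hy2] := nsq_le1 _ hy.
have bnd (a b : H) : nsq a <= 1 -> nsq b <= 1 -> cabs (ip (X a) b) <= `|M|.
  move=> ha hb; apply: (le_trans (cs _ _)).
  have h1 := hnorm_le1 _ ha; have h2 := hnorm_le1 _ hb.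
  have g1 := hnorm_ge0 a; have g2 := hnorm_ge0 b; have g3 := hnorm_ge0 (X a).
  have := hM a. have := ler_norm M. have := normr_ge0 M. nra.
apply: (le_trans (cabsD _ _)).
have := bnd _ _ hx2 hy1; have := bnd _ _ hx1 hy2. lra.
Qed.

Lemma step2 (X : H -> H) (hX : bounded_op X) q (hq1 : cabs q <= 1) (w : H) :
  cabs q * cabs (ip (X w) w) <=
    sup (Eset q (opmx (@zero_op R H) X X (@zero_op R H))) * nsq w.
Proof.

pose T := opmx (@zero_op R H) X X (@zero_op R H).
have hE := bound_E X hX q.
have n0 := nsq_ge0 w.
case: (ltrP 0 (nsq w)) => np; last first.
  have e : nsq w = 0 by apply/le_anti/andP.
  by rewrite e mulr0 (nsq_eq0 _ e) (Y0 X hX) ip0l cabs0 mulr0.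
set n := nsq w in np n0 *.
set k := (Num.sqrt (2 * n))^-1.
have ek2 : k^+2 * n = 2^-1.
  rewrite /k exprVn sqr_sqrtr; last by apply: mulr_ge0.
  by field; rewrite gt_eqF.
set u := k%:C%C *: w.
have uu : ip u u = (2^-1 : R)%:C%C.
  rewrite /u ipZl ipZr (ipxx w) -!complexr0 -/n; cplx; last by ring.
  by rewrite -ek2; ring.
have Du : ip (X u) u = (k^+2)%:C%C * ip (X w) w.
  rewrite /u (YZ X hX) ipZl ipZr; case: (ip (X w) w) => a b.
  by rewrite -!complexr0; cplx; ring.
clearbody u.
move: q hq1 hE => [qa qb] hq1 hE.
have cq2 : cabs (qa +i* qb)%C ^+ 2 = qa^+2 + qb^+2.
  by rewrite /cabs sqr_sqrtr //=; apply: addr_ge0; apply: sqr_ge0.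
set s := Num.sqrt (1 - cabs (qa +i* qb)%C ^+ 2).
have es : s^+2 = 1 - (qa^+2 + qb^+2).
  have c0 : 0 <= 1 - cabs (qa +i* qb)%C ^+ 2.
    have := cabs_ge0 (qa +i* qb)%C. nra.
  by rewrite /s sqr_sqrtr // cq2.
set al := (qa -i* qb)%C + s%:C%C.
set be := (qa -i* qb)%C - s%:C%C.
have mem : Eset (qa +i* qb)%C T (cabs (dsum_inner (T (u,u)) (al *: u, be *: u))).
  exists ((u,u),(al *: u, be *: u)) => //=.
  rewrite /dsum_inner /= !ipZl !ipZr uu /al /be -!complexr0.
  split; [|split]; cplx; try ring; try lra.
have val : dsum_inner (T (u,u)) (al *: u, be *: u) =
    (2 * k^+2)%:C%C * ((qa +i* qb)%C * ip (X w) w).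
  rewrite /T /opmx /zero_op /dsum_inner /= add0r addr0 !ipZr Du /al /be.
  by case: (ip (X w) w) => a b; rewrite -!complexr0; cplx; ring.
have := ub_le_sup hE mem.
rewrite val cabsM cabsR; last by apply: mulr_ge0 => //; apply: sqr_ge0.
rewrite cabsM.
set Z := cabs _ * cabs _.
have Z0 : 0 <= Z by apply: mulr_ge0; apply: cabs_ge0.
move=> h.
have e2 : k^+2 * n * Z = Z / 2 by rewrite ek2 mulrC.
have := ler_wpM2r n0 h. nra.
Qed.

Lemma hnormN (z : H) : hnorm (- z) = hnorm z.
Proof. by rewrite /hnorm ipNl ipNr opprK. Qed.
Lemma hnorm0 : hnorm (0 : H) = 0.
Proof. by rewrite /hnorm ip0l /= sqrtr0. Qed.

Lemma opnorm_le (A : H -> H) (K : R) :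
  (forall u, hnorm u <= 1 -> hnorm (A u) <= K) -> opnorm A <= K.
Proof.
move=> hA; apply: ge_sup.
  by exists (hnorm (A 0)), 0 => //=; rewrite hnorm0 ler01.
by move=> _ [x hx <-]; apply: hA.
Qed.

Lemma opnorm_ge (A : H -> H) (K : R) u :
  (forall u, hnorm u <= 1 -> hnorm (A u) <= K) -> hnorm u <= 1 ->
  hnorm (A u) <= opnorm A.
Proof.
move=> hA hu; apply: ub_le_sup; last by exists u.
by exists K => _ [x hx <-]; apply: hA.
Qed.
End Core.
Arguments Eset {R H}.
Arguments bound_E {R H}.
Arguments step2 {R H}.
Arguments re_bound {R H}.
Arguments Ylin {R H}.
Arguments ipNl {R H}.
Arguments ipZl {R H}.
Arguments ipZr {R H}.
Arguments nsq_ge0 {R H}.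
Arguments hnormN {R H}.
Arguments hnorm_i {R H}.
Arguments hnorm_tri {R H}.
Arguments opnorm_le {R H}.
Arguments opnorm_ge {R H}.
Arguments cabsM {R}.
Arguments cabs_ge0 {R}.
Arguments inv2C {R}.
Arguments cabsE {R}.

Theorem corollary3p8 (R : realType) (H : chilbert R) (X Xs : H -> H)
  (hX : bounded_op X) (hXs : is_adjoint X Xs)
  (q : R[i]) (hq0 : q != 0) (hq1 : cabs q <= 1) :
  wq_dsum q (opmx (@zero_op R H) X X (@zero_op R H)) >=
    cabs q / 2 * opnorm X
    + cabs q / 2 * `| opnorm (re_op X Xs) - opnorm (im_op X Xs) |.
Proof.
set T := opmx _ _ _ _.
have -> : wq_dsum q T = sup (Eset q T) by [].
set S := sup (Eset q T).
have hE : has_ubound (Eset q T) by exact: bound_E.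
have cq0 : 0 < cabs q.
  rewrite lt_def cabs_ge0 andbT; apply/eqP => h.
  by move/eqP: hq0; apply; apply/eqP; rewrite -normr_eq0 -cabsE h.
have S0 : 0 <= S.
  have [e0|ne] := eqVneq (Eset q T) set0.
    by rewrite /S e0 sup0.
  case/set0P: ne => e he.
  apply: le_trans (ub_le_sup hE he).
  by case: he => p _ <-; apply: cabs_ge0.
set K := S / cabs q.
have K0 : 0 <= K by apply: divr_ge0 => //; apply: ltW.
have eS : S = K * cabs q by rewrite /K mulfVK // gt_eqF.
have hbX : forall w, cabs (hinner (X w) w) <= K * complex.Re (hinner w w).
  move=> w; have := step2 X hX q hq1 w; rewrite -/T -/S eS.
  have := nsq_ge0 w; have := cabs_ge0 (hinner (X w) w). nra.
pose Y := fun x => - ('i%C *: X x).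
pose Ys := fun x => 'i%C *: Xs x.
have hY : bounded_op Y.
  split.
    move=> a x y; rewrite /Y (Ylin X hX) scalerDr opprD scalerN !scalerA (mulrC a) //.
  case: hX.2 => M hM; exists M => x; rewrite /Y hnormN hnorm_i; exact: hM.
have hYs : is_adjoint Y Ys.
  move=> x y; rewrite /Y /Ys ipNl ipZl ipZr hXs.
  by case: (hinner x (Xs y)) => a b; cplx; ring.
have hbY : forall w, cabs (hinner (Y w) w) <= K * complex.Re (hinner w w).
  move=> w; apply: le_trans (hbX w).
  rewrite /Y ipNl ipZl -mulN1r !cabsM.
  have -> : cabs (-1 : R[i]) = 1 by apply: complexI; rewrite cabsE normrN normr1.
  have -> : cabs ('i%C : R[i]) = 1 by rewrite /cabs /= expr2 mul0r expr1n add0r sqrtr1.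
  by rewrite !mul1r.
have eB : im_op X Xs = re_op Y Ys.
  apply: boolp.funext => x; rewrite /im_op /re_op /Y /Ys.
  have e1 : ((2 : R[i]) * 'i%C)^-1 = (2 : R[i])^-1 * (- 'i%C).
    apply: mulr1_eq; rewrite inv2C -!complexr0; cplx => /=; last by ring.
    by rewrite -[1+1]/(2%:R); field.
  rewrite e1 -scalerA; congr (_ *: _).
  by rewrite scalerBr !scaleNr opprK.
set a := opnorm (re_op X Xs).
set b := opnorm (im_op X Xs).
have bA := re_bound X Xs hX hXs K K0 hbX.
have bB := re_bound Y Ys hY hYs K K0 hbY.
have aK : a <= K by apply: opnorm_le.
have bK : b <= K by rewrite /b eB; apply: opnorm_le.
have hXab : opnorm X <= a + b.
  apply: opnorm_le => u hu.
  have dec : X u = re_op X Xs u + 'i%C *: re_op Y Ys u.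
    rewrite /re_op /Y /Ys !scalerDr !scalerA scalerN !scalerA.
    have e : 'i%C / 2 * 'i%C = - (2 : R[i])^-1.
      by rewrite inv2C -!complexr0; cplx => //=; ring.
    rewrite e !scaleNr opprK addrACA subrr addr0 -scalerDl.
    have -> : (2 : R[i])^-1 + (2 : R[i])^-1 = 1.
      rewrite inv2C -!complexr0; cplx => /=; last by ring.
      by field.
    by rewrite scale1r.
  rewrite dec; apply: le_trans (hnorm_tri _ _) _; rewrite hnorm_i.
  apply: lerD; first exact: (opnorm_ge _ K).
  by rewrite /b eB; apply: (opnorm_ge _ K).
have hn : `|a - b| <= 2 * K - a - b.
  by rewrite ler_norml; apply/andP; split; lra.
have := normr_ge0 (a - b).
rewrite eS; nra.
Qed.
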